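(* Let $f^+,f^-,f^\circ:[0,1]\to[0,1]$ satisfy $f^+(0)=f^-(0)=f^\circ(0)=0$, let $x$ be a feasible LP solution, and let $\alpha>0$. If $ALG(uvw)\le\alpha\, LP(uvw)$ for every $u,v,w\in V$, then for every step $t$ of the pivot rounding algorithm, $\mathbb{E}[ALG_t]\le\alpha\,\mathbb{E}[LP_t]$. Consequently the expected cost of the clustering returned by the algorithm is at most $\alpha$ times the LP objective value of $x$.
   Context: Setting: finite vertex set $V$; every pair of distinct vertices is a positive edge ($E^+$), a negative edge ($E^-$), or not an edge. The cost of a clustering (partition of $V$) is the number of positive edges with endpoints in different clusters plus the number of negative edges with endpoints in the same cluster. LP: variables $x_{uv}=x_{vu}\in[0,1]$, $x_{uu}=0$, $x_{uv}+x_{vw}\ge x_{uw}$ for all $u,v,w$; objective $\sum_{E^+}x_{uv}+\sum_{E^-}(1-x_{uv})$. For $u,w\in V$ let $p_{uw}=f^+(x_{uw})$, $f^-(x_{uw})$, or $f^\circ(x_{uw})$ according as $(u,w)$ is a positive edge, negative edge, or non-edge (so $p_{uu}=0$). Pivot rounding algorithm: $V_0=V$; while $V_t\ne\emptyset$: choose pivot $w_t\in V_t$ uniformly at random, put each $u\in V_t$ in $S_t$ independently with probability $1-p_{uw_t}$, set $V_{t+1}=V_t\setminus S_t$; output the $S_t$. $ALG_t$ is the number of positive edges $(u,v)$ with $u,v\in V_t$ and exactly one endpoint in $S_t$ plus the number of negative edges $(u,v)$ with $u,v\in V_t$ and both endpoints in $S_t$; $LP_t$ is the sum over positive edges $(u,v)$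 with $u,v\in V_t$ and at least one endpoint in $S_t$ of $x_{uv}$, plus the sum over such negative edges of $1-x_{uv}$ (with $LP_t=ALG_t=0$ after termination). For $u,v,w\in V$ define $e.cost_w(u,v)=p_{uw}(1-p_{vw})+(1-p_{uw})p_{vw}$ if $(u,v)\in E^+$, $(1-p_{uw})(1-p_{vw})$ if $(u,v)\in E^-$, $0$ otherwise; $e.lp_w(u,v)=(1-p_{uw}p_{vw})x_{uv}$ if $(u,v)\in E^+$, $(1-p_{uw}p_{vw})(1-x_{uv})$ if $(u,v)\in E^-$, $0$ otherwise. These are also defined for $u=v$: each pair $(u,u)$ is treated either as a non-edge or as a positive edge (positive self-loop; this is the convention used for complete graphs). Set $ALG(uvw)=e.cost_w(u,v)+e.cost_v(w,u)+e.cost_u(v,w)$ and $LP(uvw)=e.lp_w(u,v)+e.lp_v(w,u)+e.lp_u(v,w)$. *)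

(* Defs.v *)
From mathcomp Require Import all_boot all_order all_algebra.
Set Implicit Arguments. Unset Strict Implicit. Unset Printing Implicit Defensive.
Import Order.TTheory GRing.Theory Num.Theory.
Local Open Scope ring_scope.

Inductive ekind := EPos | ENeg | ENone.

Definition is_pos (k : ekind) : bool := if k is EPos then true else false.
Definition is_neg (k : ekind) : bool := if k is ENeg then true else false.

Section Defs.
Variables (R : realFieldType) (V : finType).
Variable (k : V -> V -> ekind).
Variables (fp fm fo : R -> R).
Variable (x : V -> V -> R).

Definition pair_sum (F : V -> V -> R) : R :=
  \sum_(u : V) \sum_(v : V | (enum_rank u < enum_rank v)%N) F u v.

Definition lp_feasible : Prop :=
  [/\ forall u v, x u v = x v u,
      forall u, x u u = 0,
      forall u v, 0 <= x u v <= 1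
    & forall u v w, x u w <= x u v + x v w].

Definition lp_obj : R :=
  pair_sum (fun u v => match k u v with
                       | EPos => x u v | ENeg => 1 - x u v | ENone => 0 end).

Definition pval (u w : V) : R :=
  match k u w with
  | EPos => fp (x u w) | ENeg => fm (x u w) | ENone => fo (x u w) end.

Definition ecost (w u v : V) : R :=
  match k u v with
  | EPos => pval u w * (1 - pval v w) + (1 - pval u w) * pval v w
  | ENeg => (1 - pval u w) * (1 - pval v w)
  | ENone => 0 end.

Definition elp (w u v : V) : R :=
  match k u v with
  | EPos => (1 - pval u w * pval v w) * x u v
  | ENeg => (1 - pval u w * pval v w) * (1 - x u v)
  | ENone => 0 end.

Definition ALG3 (u v w : V) : R := ecost w u v + ecost v w u + ecost u v w.
Definition LP3 (u v w : V) : R := elp w u v + elp v w u + elp u v w.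

(* Probability that the step with remaining set W and pivot w selects exactly
   S (for S a subset of W): each u in W joins S independently w.p. 1 - p_{uw}. *)
Definition selProb (W S : {set V}) (w : V) : R :=
  \prod_(u in W) (if u \in S then 1 - pval u w else pval u w).

(* Expectation over one round of the algorithm started from the remaining set
   W: uniform pivot w in W, then random S subset of W; 0 if W is empty. *)
Definition step_exp (W : {set V}) (g : {set V} -> R) : R :=
  if W == set0 then 0 else
  #|W|%:R^-1 * \sum_(w in W) \sum_(S in powerset W) selProb W S w * g S.

(* Et t W F = E[ F(V_t, S_t) ] for the run started at V_0 = W,
   where the contribution is 0 once the algorithm has terminated. *)
Fixpoint Et (t : nat) (W : {set V}) (F : {set V} -> {set V} -> R) : R :=
  match t with
  | 0 => step_exp W (fun S => F W S)
  | t'.+1 => step_exp W (fun S => Et t' (W :\: S) F)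
  end.

(* ALG_t and LP_t as functions of (V_t, S_t). *)
Definition ALG_step (W S : {set V}) : R :=
  pair_sum (fun u v =>
    if (u \in W) && (v \in W) then
      match k u v with
      | EPos => ((u \in S) != (v \in S))%:R
      | ENeg => ((u \in S) && (v \in S))%:R
      | ENone => 0 end
    else 0).

Definition LP_step (W S : {set V}) : R :=
  pair_sum (fun u v =>
    if [&& u \in W, v \in W & (u \in S) || (v \in S)] then
      match k u v with
      | EPos => x u v
      | ENeg => 1 - x u v
      | ENone => 0 end
    else 0).

Definition same_cluster (cl : seq {set V}) (u v : V) : bool :=
  has (fun S : {set V} => (u \in S) && (v \in S)) cl.

Definition clustering_cost (cl : seq {set V}) : R :=
  pair_sum (fun u v =>
    match k u v with
    | EPos => (~~ same_cluster cl u v)%:R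
    | ENeg => (same_cluster cl u v)%:R
    | ENone => 0 end).

(* Expected value of h(output clusters) for the run from W, with fuel n.
   Every positive-probability round removes at least the pivot (p_{ww} = 0),
   so fuel #|V| suffices for the run from V. *)
Fixpoint Eout (n : nat) (W : {set V}) (h : seq {set V} -> R) : R :=
  match n with
  | 0 => h [::]
  | n'.+1 =>
      if W == set0 then h [::]
      else step_exp W (fun S => Eout n' (W :\: S) (fun rest => h (S :: rest)))
  end.

Definition expected_output_cost : R :=
  Eout #|V| [set: V] clustering_cost.

End Defs.

(* Main.v *)
Require Import Defs.
From mathcomp Require Import all_boot all_order all_algebra.
From mathcomp Require Import ring lra.
Set Implicit Arguments. Unset Strict Implicit. Unset Printing Implicit Defensive.
Import Order.TTheory GRing.Theory Num.Theory.
Local Open Scope ring_scope.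

Section PSsec.
Variables (R : realFieldType) (V : finType).

Lemma PS_full (G : V -> bool -> R) :
  \sum_(S : {set V}) \prod_(z : V) G z (z \in S) = \prod_(z : V) (G z true + G z false).
Proof.
have -> : \prod_(z : V) (G z true + G z false) = \prod_(z : V) \sum_(c : bool) G z c.
  by apply: eq_bigr => z _; rewrite big_bool.
rewrite bigA_distr_bigA /=.
rewrite (reindex (fun f : {ffun V -> bool} => [set z | f z])) /=.
  by apply: eq_bigr => f _; apply: eq_bigr => z _; rewrite inE.
exists (fun S : {set V} => [ffun z => z \in S]) => f _.
  by apply/ffunP => z; rewrite ffunE inE.
by apply/setP => z; rewrite inE ffunE.
Qed.

Lemma PS (W : {set V}) (G : V -> bool -> R) :
  \sum_(S in powerset W) \prod_(z in W) G z (z \in S) = \prod_(z in W) (G z true + G z false).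
Proof.
pose G' z c := if z \in W then G z c else (if c then 0 else 1).
have := PS_full G'.
rewrite (bigID (fun z => z \in W)) /=.
rewrite [X in _ * X]big1; last by move=> z /negbTE zW; rewrite /G' zW add0r.
rewrite mulr1 (eq_bigr (fun z => G z true + G z false)); last by move=> z zW; rewrite /G' zW.
move=> <-.
rewrite big_mkcond /=.
apply: eq_bigr => S _.
rewrite [RHS](bigID (fun z => z \in W)) /=.
rewrite [X in _ * X](_ : _ = if S \in powerset W then 1 else 0); last first.
  case: ifP => [|/negbT].
    rewrite powersetE => /subsetP sSW.
    apply: big1 => z zW; rewrite /G' (negbTE zW).
    by case: ifP => // /sSW; rewrite (negbTE zW).
  rewrite powersetE => /subsetPn [z zS zW].
  by rewrite (bigD1 z) //= /G' (negbTE zW) zS mul0r.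
rewrite [X in X * _](eq_bigr (fun z => G z (z \in S))); last by move=> z zW; rewrite /G' zW.
by case: ifP; rewrite ?mulr1 ?mulr0.
Qed.

Lemma eq_pair_sum (F G : V -> V -> R) :
  (forall u v, u != v -> F u v = G u v) -> pair_sum F = pair_sum G.
Proof.
move=> FG; apply: eq_bigr => u _; apply: eq_bigr => v uv; apply: FG.
by apply/eqP => E; move: uv; rewrite E ltnn.
Qed.

Lemma pair_sumD (F G : V -> V -> R) :
  pair_sum (fun u v => F u v + G u v) = pair_sum F + pair_sum G.
Proof.
by rewrite /pair_sum -big_split; apply: eq_bigr => u _; rewrite -big_split.
Qed.

Lemma sum_pair_sum (I : finType) (A : {pred I}) (c : I -> R) (F : I -> V -> V -> R) :
  \sum_(i in A) c i * pair_sum (F i) = pair_sum (fun u v => \sum_(i in A) c i * F i u v).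
Proof.
rewrite /pair_sum.
under eq_bigr do rewrite big_distrr.
rewrite exchange_big; apply: eq_bigr => u _.
under eq_bigr do rewrite big_distrr.
by rewrite exchange_big.
Qed.

Lemma pair_full (F : V -> V -> R) : (forall u v, F u v = F v u) ->
  \sum_u \sum_v F u v = pair_sum F + pair_sum F + \sum_u F u u.
Proof.
move=> Fs.
have E1 : pair_sum F = \sum_u \sum_v (if (enum_rank u < enum_rank v)%N then F u v else 0).
  by apply: eq_bigr => u _; rewrite big_mkcond.
have E2 : pair_sum F = \sum_u \sum_v (if (enum_rank v < enum_rank u)%N then F u v else 0).
  rewrite E1 exchange_big; apply: eq_bigr => u _; apply: eq_bigr => v _.
  by rewrite Fs.
have E3 : \sum_u F u u = \sum_u \sum_v (if v == u then F u v else 0).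
  by apply: eq_bigr => u _; rewrite -big_mkcond big_pred1_eq.
rewrite {1}E1 E2 E3 -!big_split; apply: eq_bigr => u _; rewrite -!big_split.
apply: eq_bigr => v _ /=.
case: (ltngtP (enum_rank u) (enum_rank v)) => [h|h|h].
- by rewrite (_ : v == u = false) ?addr0 //; apply/eqP => E; move: h; rewrite E ltnn.
- by rewrite (_ : v == u = false) ?addr0 ?add0r //; apply/eqP => E; move: h; rewrite E ltnn.
- by rewrite (enum_rank_inj (ord_inj h)) eqxx !add0r.
Qed.

Section Main.
Variables (k : V -> V -> ekind) (fp fm fo : R -> R) (x : V -> V -> R) (alpha : R).
Hypothesis ksym : forall u v, k u v = k v u.
Hypothesis kself : forall u, k u u = EPos \/ k u u = ENone.
Hypothesis hfp : forall y, 0 <= y <= 1 -> 0 <= fp y <= 1.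
Hypothesis hfm : forall y, 0 <= y <= 1 -> 0 <= fm y <= 1.
Hypothesis hfo : forall y, 0 <= y <= 1 -> 0 <= fo y <= 1.
Hypotheses (fp0 : fp 0 = 0) (fm0 : fm 0 = 0) (fo0 : fo 0 = 0).
Hypothesis feas : lp_feasible x.
Hypothesis apos : 0 < alpha.
Hypothesis tri : forall u v w, ALG3 k fp fm fo x u v w <= alpha * LP3 k fp fm fo x u v w.

Local Notation p := (pval k fp fm fo x).
Local Notation sP := (selProb k fp fm fo x).
Local Notation sE := (step_exp k fp fm fo x).
Local Notation ec := (ecost k fp fm fo x).
Local Notation el := (elp k fp fm fo x).

Lemma xsym u v : x u v = x v u. Proof. by case: feas. Qed.
Lemma xdiag u : x u u = 0. Proof. by case: feas. Qed.
Lemma xbd u v : 0 <= x u v <= 1. Proof. by case: feas. Qed.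

Lemma p_bd u w : 0 <= p u w <= 1.
Proof. by rewrite /pval; case: (k u w); [apply: hfp|apply: hfm|apply: hfo]; apply: xbd. Qed.

Lemma p_self w : p w w = 0.
Proof. by rewrite /pval xdiag; case: (k w w). Qed.

Definition q (w z : V) (b : bool) : R := if b then 1 - p z w else p z w.

Lemma q_ge0 w z b : 0 <= q w z b.
Proof. by have /andP[h1 h2] := p_bd z w; rewrite /q; case: b; lra. Qed.

Lemma sP_ge0 (W S : {set V}) w : 0 <= sP W S w.
Proof. by apply: prodr_ge0 => z _; exact: (q_ge0 w z (z \in S)). Qed.

Lemma sP_pivot (W S : {set V}) w : w \in W -> w \notin S -> sP W S w = 0.
Proof.
by move=> wW wS; rewrite /selProb (bigD1 w) //= (negbTE wS) p_self mul0r.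
Qed.

Lemma sum_sP (W : {set V}) w : \sum_(S in powerset W) sP W S w = 1.
Proof.
rewrite (PS W (q w)); apply: big1 => z _; rewrite /q; lra.
Qed.

Lemma marg (W : {set V}) w u v a b : u != v -> u \in W -> v \in W ->
  \sum_(S in powerset W) sP W S w * (((u \in S) == a)%:R * ((v \in S) == b)%:R)
  = q w u a * q w v b.
Proof.
move=> uv uW vW.
pose G z c := q w z c * (if z == u then (c == a)%:R else 1) * (if z == v then (c == b)%:R else 1).
have vu : (v == u) = false by apply/negbTE; rewrite eq_sym.
transitivity (\sum_(S in powerset W) \prod_(z in W) G z (z \in S)).
  apply: eq_bigr => S _; rewrite /G /selProb.
  rewrite (bigD1 u) //= (bigD1 v) /=; last by rewrite vW eq_sym.
  rewrite [in RHS](bigD1 u) //= [in RHS](bigD1 v) /=; last by rewrite vW eq_sym.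
  rewrite eqxx (negbTE uv) vu eqxx.
  rewrite [X in _ = _ * (_ * X)](eq_bigr (fun z => q w z (z \in S))); last first.
    by move=> z /andP[/andP[_ zu] zv]; rewrite (negbTE zu) (negbTE zv) !mulr1.
  rewrite !mulr1; rewrite -/(q w u (u \in S)) -/(q w v (v \in S)); set P := \prod_(i | _) _; set C := (_ == a)%:R; set D := (_ == b)%:R; ring.
transitivity (\prod_(z in W) (G z true + G z false)); first exact: PS W G.
rewrite (bigD1 u) //= (bigD1 v) /=; last by rewrite vW eq_sym.
rewrite big1; last first.
  by move=> z /andP[/andP[_ zu] zv]; rewrite /G (negbTE zu) (negbTE zv) !mulr1 /q; ring.
rewrite /G eqxx (negbTE uv) vu eqxx.
clear G; by case: a; case: b; rewrite /= ?mulr1 ?mulr0 ?addr0 ?add0r ?mulr1.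
Qed.

Lemma mh (W : {set V}) w u v (h : bool -> bool -> R) : u != v -> u \in W -> v \in W ->
  \sum_(S in powerset W) sP W S w * h (u \in S) (v \in S)
  = \sum_(a : bool) \sum_(b : bool) q w u a * q w v b * h a b.
Proof.
move=> uv uW vW.
transitivity (\sum_(S in powerset W) \sum_(a : bool) \sum_(b : bool)
   h a b * (sP W S w * (((u \in S) == a)%:R * ((v \in S) == b)%:R))).
  apply: eq_bigr => S _; rewrite !big_bool /=.
  by case: (u \in S); case: (v \in S); rewrite /=; ring.
rewrite exchange_big; apply: eq_bigr => a _.
rewrite exchange_big; apply: eq_bigr => b _.
by rewrite -big_distrr /= marg // mulrC.
Qed.


Lemma EALG (W : {set V}) w :
  \sum_(S in powerset W) sP W S w * ALG_step R k W S
  = pair_sum (fun u v => if (u \in W) && (v \in W) then ec w u v else 0).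
Proof.
rewrite /ALG_step sum_pair_sum; apply: eq_pair_sum => u v uv.
case: (boolP ((u \in W) && (v \in W))) => [/andP[uW vW] | /negbTE nW]; last first.
  by rewrite big1 // => S _; rewrite mulr0.
rewrite /ecost; case: (k u v).
- rewrite (mh w (fun a b => (a != b)%:R)) // !big_bool /q /=; ring.
- rewrite (mh w (fun a b => (a && b)%:R)) // !big_bool /q /=; ring.
- by rewrite big1 // => S _; rewrite mulr0.
Qed.

Lemma ELP (W : {set V}) w :
  \sum_(S in powerset W) sP W S w * LP_step k x W S
  = pair_sum (fun u v => if (u \in W) && (v \in W) then el w u v else 0).
Proof.
rewrite /LP_step sum_pair_sum; apply: eq_pair_sum => u v uv.
case: (boolP ((u \in W) && (v \in W))) => [/andP[uW vW] | /negbTE nW]; last first.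
  by rewrite big1 // => S _; case: (u \in W) nW; case: (v \in W) => //= _; rewrite mulr0.
rewrite uW vW /elp /=; case: (k u v).
- rewrite (mh w (fun a b => if a || b then x u v else 0)) // !big_bool /q /=; ring.
- rewrite (mh w (fun a b => if a || b then 1 - x u v else 0)) // !big_bool /q /=; ring.
- by rewrite big1 // => S _; case: ifP; rewrite mulr0.
Qed.

Lemma ec_sym w u v : ec w u v = ec w v u.
Proof. by rewrite /ecost ksym; case: (k v u); ring. Qed.

Lemma el_sym w u v : el w u v = el w v u.
Proof. by rewrite /elp ksym xsym; case: (k v u); ring. Qed.

Lemma ec_diag w u : 0 <= ec w u u.
Proof.
have /andP[h1 h2] := p_bd u w.
rewrite /ecost; case: (kself u) => ->; last by [].
by apply: addr_ge0; apply: mulr_ge0; rewrite ?subr_ge0.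
Qed.

Lemma el_diag w u : el w u u = 0.
Proof. by rewrite /elp xdiag; case: (kself u) => ->; rewrite ?mulr0. Qed.

Definition chi (W : {set V}) u : R := (u \in W)%:R.

Lemma chi_ge0 W u : 0 <= chi W u.
Proof. by rewrite /chi ler0n. Qed.

Lemma sum_in_chi (W : {set V}) (Y : V -> R) :
  \sum_(w in W) Y w = \sum_w chi W w * Y w.
Proof.
rewrite big_mkcond; apply: eq_bigr => w _; rewrite /chi.
by case: (w \in W); rewrite ?mul1r ?mul0r.
Qed.

Definition E3 (W : {set V}) (g : V -> V -> V -> R) : R :=
  \sum_a \sum_b \sum_c chi W a * chi W b * chi W c * g a b c.

Lemma E3_rot1 W g : E3 W (fun u v w => g w u v) = E3 W g.
Proof.
rewrite /E3; under eq_bigr do rewrite exchange_big; rewrite exchange_big.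
apply: eq_bigr => a _; apply: eq_bigr => b _; apply: eq_bigr => c _; ring.
Qed.

Lemma E3_rot2 W g : E3 W (fun u v w => g v w u) = E3 W g.
Proof.
rewrite /E3 exchange_big; under eq_bigr do rewrite exchange_big.
apply: eq_bigr => a _; apply: eq_bigr => b _; apply: eq_bigr => c _; ring.
Qed.

Lemma E3D3 W g1 g2 g3 : E3 W (fun a b c => g1 a b c + g2 a b c + g3 a b c)
   = E3 W g1 + E3 W g2 + E3 W g3.
Proof.
rewrite /E3 -!big_split; apply: eq_bigr => a _; rewrite -!big_split.
apply: eq_bigr => b _; rewrite -!big_split; apply: eq_bigr => c _ /=; ring.
Qed.

Lemma E3_tri W : E3 W (fun a b c => ec a b c) <= alpha * E3 W (fun a b c => el a b c).
Proof.
have h1 : E3 W (fun u v w => ALG3 k fp fm fo x u v w) =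
   E3 W (fun a b c => ec a b c) + E3 W (fun a b c => ec a b c) + E3 W (fun a b c => ec a b c).
  by rewrite /ALG3 E3D3 (E3_rot1 W (fun a b c => ec a b c)) (E3_rot2 W (fun a b c => ec a b c)).
have h2 : E3 W (fun u v w => LP3 k fp fm fo x u v w) =
   E3 W (fun a b c => el a b c) + E3 W (fun a b c => el a b c) + E3 W (fun a b c => el a b c).
  by rewrite /LP3 E3D3 (E3_rot1 W (fun a b c => el a b c)) (E3_rot2 W (fun a b c => el a b c)).
have h3 : E3 W (fun u v w => ALG3 k fp fm fo x u v w) <= alpha * E3 W (fun u v w => LP3 k fp fm fo x u v w).
  rewrite /E3 mulr_sumr; apply: ler_sum => a _; rewrite mulr_sumr; apply: ler_sum => b _.
  rewrite mulr_sumr; apply: ler_sum => c _; rewrite mulrCA; apply: ler_wpM2l => //.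
  by rewrite !mulr_ge0 ?chi_ge0.
move: h3; rewrite h1 h2 !mulrDr => h3.
lra.
Qed.

Lemma step_bound (W : {set V}) : sE W (ALG_step R k W) <= alpha * sE W (LP_step k x W).
Proof.
rewrite /step_exp; case: eqP => [_|/eqP W0]; first by rewrite mulr0.
rewrite mulrCA; apply: ler_wpM2l; first by rewrite invr_ge0 ler0n.
under eq_bigr do rewrite EALG.
under [in X in _ <= X]eq_bigr do rewrite ELP.
set FA := fun w u v => if (u \in W) && (v \in W) then ec w u v else 0.
set FL := fun w u v => if (u \in W) && (v \in W) then el w u v else 0.
have hc : forall u v (e : R), (if (u \in W) && (v \in W) then e else 0) = chi W u * chi W v * e.
  by move=> u v e; rewrite /chi; case: (u \in W); case: (v \in W); rewrite /= ?mul1r ?mul0r.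
have hA w : pair_sum (FA w) + pair_sum (FA w) =
   \sum_u \sum_v chi W u * chi W v * ec w u v - \sum_u chi W u * ec w u u.
  rewrite (pair_full (F := fun u v => chi W u * chi W v * ec w u v)); last first.
    by move=> u v; rewrite ec_sym; ring.
  rewrite (_ : pair_sum (FA w) = pair_sum (fun u v => chi W u * chi W v * ec w u v)); last first.
    by apply: eq_pair_sum => u v _; rewrite /FA hc.
  rewrite (_ : \sum_u chi W u * chi W u * ec w u u = \sum_u chi W u * ec w u u); first ring.
  by apply: eq_bigr => u _; rewrite /chi; case: (u \in W); rewrite ?mul1r ?mul0r.
have hL w : pair_sum (FL w) + pair_sum (FL w) =
   \sum_u \sum_v chi W u * chi W v * el w u v.
  rewrite (pair_full (F := fun u v => chi W u * chi W v * el w u v)); last first.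
    by move=> u v; rewrite el_sym; ring.
  rewrite (_ : pair_sum (FL w) = pair_sum (fun u v => chi W u * chi W v * el w u v)); last first.
    by apply: eq_pair_sum => u v _; rewrite /FL hc.
  by rewrite big1 ?addr0 // => u _; rewrite el_diag mulr0.
have e3 : forall g : V -> V -> V -> R, \sum_w chi W w * (\sum_u \sum_v chi W u * chi W v * g w u v) = E3 W g.
  move=> g; apply: eq_bigr => a _; rewrite mulr_sumr; apply: eq_bigr => b _.
  rewrite mulr_sumr; apply: eq_bigr => c _; ring.
have e1 : \sum_(w in W) pair_sum (FA w) + \sum_(w in W) pair_sum (FA w)
   = E3 W (fun a b c => ec a b c) - \sum_w chi W w * \sum_u chi W u * ec w u u.
  rewrite -big_split /= sum_in_chi.
  rewrite -(e3 (fun a b c => ec a b c)) -sumrB; apply: eq_bigr => w _ /=.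
  by rewrite hA; ring.
have e2 : \sum_(w in W) pair_sum (FL w) + \sum_(w in W) pair_sum (FL w)
   = E3 W (fun a b c => el a b c).
  rewrite -big_split /= sum_in_chi -(e3 (fun a b c => el a b c)).
  by apply: eq_bigr => w _ /=; rewrite hL; ring.
have d0 : 0 <= \sum_w chi W w * \sum_u chi W u * ec w u u.
  apply: sumr_ge0 => w _; apply: mulr_ge0; first exact: chi_ge0.
  by apply: sumr_ge0 => u _; apply: mulr_ge0; [exact: chi_ge0 | exact: ec_diag].
have t := E3_tri W.
move: t; rewrite -e2 mulrDr => t.
lra.
Qed.


Lemma sE_le (W : {set V}) g1 g2 :
  (forall w S, w \in W -> S \in powerset W -> w \in S -> g1 S <= g2 S) -> sE W g1 <= sE W g2.
Proof.
move=> H; rewrite /step_exp; case: eqP => [_|_]; first exact: lexx.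
apply: ler_wpM2l; first by rewrite invr_ge0 ler0n.
apply: ler_sum => w wW; apply: ler_sum => S SW.
case: (boolP (w \in S)) => wS.
- exact: (ler_wpM2l (sP_ge0 _ _ _) (H _ _ wW SW wS)).
- by rewrite sP_pivot // !mul0r.
Qed.

Lemma sE_scale (W : {set V}) a g : sE W (fun S => a * g S) = a * sE W g.
Proof.
rewrite /step_exp; case: eqP => _; first by rewrite mulr0.
rewrite [RHS]mulrCA; congr (_ * _); rewrite mulr_sumr; apply: eq_bigr => w _.
by rewrite mulr_sumr; apply: eq_bigr => S _; ring.
Qed.

Lemma sE_add (W : {set V}) g1 g2 : sE W (fun S => g1 S + g2 S) = sE W g1 + sE W g2.
Proof.
rewrite /step_exp; case: eqP => _; first by rewrite addr0.
rewrite -mulrDr -big_split; congr (_ * _); apply: eq_bigr => w _.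
by rewrite -big_split; apply: eq_bigr => S _ /=; ring.
Qed.

Lemma sE_sub (W : {set V}) g1 g2 a :
  sE W (fun S => g1 S - a * g2 S) = sE W g1 - a * sE W g2.
Proof.
rewrite /step_exp; case: eqP => _; first by rewrite mulr0 subr0.
rewrite mulrCA -mulrBr; congr (_ * _); rewrite mulr_sumr -sumrB; apply: eq_bigr => w _.
by rewrite mulr_sumr -sumrB; apply: eq_bigr => S _; ring.
Qed.

Lemma sE_const (W : {set V}) c : W != set0 -> sE W (fun _ => c) = c.
Proof.
move=> W0; rewrite /step_exp (negbTE W0).
under eq_bigr do rewrite -big_distrl /= sum_sP mul1r.
rewrite sumr_const -[c *+ _]mulr_natl mulrA mulVf ?mul1r //.
by rewrite pnatr_eq0 -lt0n card_gt0.
Qed.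

Lemma sE_ext (W : {set V}) g1 g2 : (forall S, g1 S = g2 S) -> sE W g1 = sE W g2.
Proof.
move=> H; rewrite /step_exp; case: eqP => // _; congr (_ * _).
by apply: eq_bigr => w _; apply: eq_bigr => S _; rewrite H.
Qed.

Lemma Et_bound t (W : {set V}) :
  Et k fp fm fo x t W (ALG_step R k) <= alpha * Et k fp fm fo x t W (LP_step k x).
Proof.
elim: t W => [|t IH] W /=; first exact: step_bound.
by rewrite -sE_scale; apply: sE_le => w S _ _ _; exact: IH.
Qed.

Definition costterm (cl : seq {set V}) u v : R :=
  match k u v with
  | EPos => (~~ same_cluster cl u v)%:R
  | ENeg => (same_cluster cl u v)%:R
  | ENone => 0 end.
Definition lpterm u v : R :=
  match k u v with EPos => x u v | ENeg => 1 - x u v | ENone => 0 end.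
Definition Cout (W : {set V}) pre :=
  pair_sum (fun u v => if (u \in W) && (v \in W) then 0 else costterm pre u v).
Definition LPrem (W : {set V}) :=
  pair_sum (fun u v => if (u \in W) && (v \in W) then lpterm u v else 0).
Definition inv (pre : seq {set V}) (W : {set V}) :=
  forall u v, u \in W -> same_cluster pre u v = false.

Lemma sc_rcons pre (S : {set V}) u v :
  same_cluster (rcons pre S) u v = same_cluster pre u v || (u \in S) && (v \in S).
Proof. by rewrite /same_cluster -cats1 has_cat /= orbF. Qed.

Lemma I1 (W S : {set V}) pre : S \subset W -> inv pre W ->
  Cout (W :\: S) (rcons pre S) = Cout W pre + ALG_step R k W S.
Proof.
move=> sSW I; rewrite /Cout /ALG_step -pair_sumD; apply: eq_pair_sum => u v _.
rewrite !inE /costterm sc_rcons.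
move: (subsetP sSW u) (subsetP sSW v) (I u v).
case: (u \in S); case: (v \in S); case: (u \in W); case: (v \in W).
all: move=> hu hv hI; try (by move: (hu isT)); try (by move: (hv isT)).
all: try rewrite (hI isT); case: (k u v); rewrite /= ?add0r ?addr0 ?orbF //.
Qed.

Lemma I2 (W S : {set V}) : S \subset W ->
  LPrem W = LPrem (W :\: S) + LP_step k x W S.
Proof.
move=> sSW; rewrite /LPrem /LP_step -pair_sumD; apply: eq_pair_sum => u v _.
rewrite !inE /lpterm.
move: (subsetP sSW u) (subsetP sSW v).
case: (u \in S); case: (v \in S); case: (u \in W); case: (v \in W).
all: move=> hu hv; try (by move: (hu isT)); try (by move: (hv isT)).
all: rewrite /= ?add0r ?addr0 //.
Qed.

Lemma inv_step pre (W S : {set V}) : inv pre W -> inv (rcons pre S) (W :\: S).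
Proof.
move=> I u v; rewrite inE => /andP[uS uW]; by rewrite sc_rcons I // (negbTE uS).
Qed.

Lemma Eout_ext n (W : {set V}) h1 h2 : (forall l, h1 l = h2 l) ->
  Eout k fp fm fo x n W h1 = Eout k fp fm fo x n W h2.
Proof.
elim: n W h1 h2 => [|n IH] W h1 h2 H /=; first exact: H.
case: ifP => _; first exact: H.
by apply: sE_ext => S; apply: IH => l; exact: H.
Qed.

Lemma pair_sum0 : pair_sum (fun _ _ : V => (0 : R)) = 0.
Proof. by rewrite /pair_sum big1 // => u _; rewrite big1. Qed.

Lemma base pre : clustering_cost R k (pre ++ [::]) = Cout set0 pre + alpha * LPrem set0.
Proof.
rewrite cats0 (_ : LPrem set0 = 0) ?mulr0 ?addr0; last first.
  by rewrite /LPrem (eq_pair_sum (G := fun _ _ => 0)) ?pair_sum0 // => u v _; rewrite inE.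
by rewrite /Cout /clustering_cost; apply: eq_pair_sum => u v _; rewrite inE.
Qed.

Lemma Eout_bound n : forall (W : {set V}) pre, (#|W| <= n)%N -> inv pre W ->
  Eout k fp fm fo x n W (fun rest => clustering_cost R k (pre ++ rest))
  <= Cout W pre + alpha * LPrem W.
Proof.
elim: n => [|n IH] W pre hc hI.
  have -> : W = set0 by apply/eqP; rewrite -cards_eq0 -leqn0.
  by rewrite /= base.
rewrite /=; case: eqP => [->|/eqP W0]; first by rewrite base.
apply: le_trans (_ : sE W (fun S => (Cout W pre + alpha * LPrem W) +
    (ALG_step R k W S - alpha * LP_step k x W S)) <= _).
  apply: sE_le => w S wW; rewrite powersetE => SW wS.
  rewrite (@Eout_ext _ _ _ (fun rest => clustering_cost R k (rcons pre S ++ rest))); last first.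
    by move=> l; rewrite cat_rcons.
  have hc' : (#|W :\: S| <= n)%N.
    rewrite -ltnS; apply: leq_trans hc; apply: proper_card; apply/properP; split.
      exact: subsetDl.
    by exists w => //; rewrite inE wS.
  apply: le_trans (IH _ _ hc' (@inv_step pre W S hI)) _.
  rewrite (I1 SW hI) (I2 SW) mulrDr.
  lra.
rewrite sE_add sE_const // (sE_sub W (ALG_step R k W) (LP_step k x W)).
have := step_bound W.
lra.
Qed.

End Main.
End PSsec.

Theorem lemma1 (R : realFieldType) (V : finType) (k : V -> V -> ekind)
  (fp fm fo : R -> R) (x : V -> V -> R) (alpha : R) :
  (forall u v, k u v = k v u) ->
  (forall u, k u u = EPos \/ k u u = ENone) ->
  (forall y, 0 <= y <= 1 -> 0 <= fp y <= 1) ->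
  (forall y, 0 <= y <= 1 -> 0 <= fm y <= 1) ->
  (forall y, 0 <= y <= 1 -> 0 <= fo y <= 1) ->
  fp 0 = 0 -> fm 0 = 0 -> fo 0 = 0 ->
  lp_feasible x ->
  0 < alpha ->
  (forall u v w, ALG3 k fp fm fo x u v w <= alpha * LP3 k fp fm fo x u v w) ->
  (forall t : nat,
      Et k fp fm fo x t [set: V] (@ALG_step R V k)
      <= alpha * Et k fp fm fo x t [set: V] (@LP_step R V k x))
  /\ expected_output_cost k fp fm fo x <= alpha * lp_obj k x.
Proof.
move=> ksym kself hfp hfm hfo fp0 fm0 fo0 feas apos tri; split.
  by move=> t; exact: (Et_bound ksym kself hfp hfm hfo fp0 fm0 fo0 feas tri t [set: V]).
have inv0 : inv [::] [set: V] by [].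
have := Eout_bound ksym kself hfp hfm hfo fp0 fm0 fo0 feas tri (leqnn #|[set: V]|) inv0.
rewrite cardsT => h; apply: le_trans h _.
rewrite (_ : Cout R k [set: V] [::] = 0) ?add0r; last first.
  by rewrite /Cout (eq_pair_sum (G := fun _ _ => 0)) ?pair_sum0 // => u v _; rewrite !inE.
rewrite (_ : LPrem k x [set: V] = lp_obj k x) //.
by rewrite /LPrem /lp_obj; apply: eq_pair_sum => u v _; rewrite !inE.
Qed.
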